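(* Fix $\alpha\in(0,1)$. Let $u\in C([-1,1])$ be monotone. Then for every $\varepsilon>0$ there exists an $\alpha$-power piecewise linear function $g$ such that $|u(x)-g(x)|\le\varepsilon$ for all $x\in[-1,1]$.
   Context: A piecewise linear (PL) function is a continuous function $g:\mathbb{R}\to\mathbb{R}$ which is affine on each of finitely many intervals partitioning $\mathbb{R}$ (separated by finitely many breakpoints). A PL function $g$ is called $\alpha$-power PL if there is a constant $c\in\mathbb{R}$ such that the slope of every linear piece of $g$ lies in $\{c\alpha^k: k\in\mathbb{Z}\}$. *)

(* Defs.v *)
From Stdlib Require Import Reals Lra List Sorted.
Open Scope R_scope.

(* The i-th closed piece (i = 0 .. length bs) determined by the increasing
   breakpoint list bs = [b_0; ...; b_{n-1}]:
   piece 0 = (-oo, b_0], piece i = [b_{i-1}, b_i], piece n = [b_{n-1}, +oo). *)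
Definition in_piece (bs : list R) (i : nat) (x : R) : Prop :=
  (i = 0%nat \/ nth (i - 1) bs 0 <= x) /\
  (i = length bs \/ x <= nth i bs 0).

Definition PL_with_slopes (S : R -> Prop) (g : R -> R) : Prop :=
  continuity g /\
  exists bs : list R,
    StronglySorted Rlt bs /\
    forall i : nat, (i <= length bs)%nat ->
      exists a b : R, S a /\ forall x, in_piece bs i x -> g x = a * x + b.

Definition is_PL (g : R -> R) : Prop := PL_with_slopes (fun _ => True) g.

Definition alpha_power_PL (alpha : R) (g : R -> R) : Prop :=
  exists c : R, PL_with_slopes (fun a => exists k : Z, a = c * powerRZ alpha k) g.

Definition monotone_on (u : R -> R) (a b : R) : Prop :=
  (forall x y, a <= x -> x <= y -> y <= b -> u x <= u y) \/
  (forall x y, a <= x -> x <= y -> y <= b -> u y <= u x).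

Definition continuous_on_interval (u : R -> R) (a b : R) : Prop :=
  forall x, a <= x <= b ->
    forall eps, 0 < eps -> exists delta, 0 < delta /\
      forall y, a <= y <= b -> Rabs (y - x) < delta -> Rabs (u y - u x) < eps.

(* Main.v *)
Require Import Defs.
From Stdlib Require Import Reals Lra List Sorted Lia.
Open Scope R_scope.
Import ListNotations.

Definition pieces (S : R -> Prop) (g : R -> R) (bs : list R) : Prop :=
  forall i : nat, (i <= length bs)%nat ->
      exists a b : R, S a /\ forall x, in_piece bs i x -> g x = a * x + b.

Definition glue (g : R -> R) (t a : R) : R -> R :=
  fun x => g (Rmin x t) + a * (Rmax x t - t).

Lemma lip_cont (f : R -> R) x : (forall y, Rabs (f y - f x) <= Rabs (y - x)) ->
  continuity_pt f x.
Proof.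
  intros H eps Heps. exists eps; split; [lra|].
  intros y [_ Hy]. simpl in *. unfold R_dist in *.
  specialize (H y). lra.
Qed.

Lemma Rmin_lip t x y : Rabs (Rmin y t - Rmin x t) <= Rabs (y - x).
Proof.
  unfold Rmin; destruct (Rle_dec y t); destruct (Rle_dec x t);
  unfold Rabs; repeat destruct Rcase_abs; lra.
Qed.

Lemma Rmax_lip t x y : Rabs (Rmax y t - Rmax x t) <= Rabs (y - x).
Proof.
  unfold Rmax; destruct (Rle_dec y t); destruct (Rle_dec x t);
  unfold Rabs; repeat destruct Rcase_abs; lra.
Qed.

Lemma glue_cont g t a : continuity g -> continuity (glue g t a).
Proof.
  intros Hg x. unfold glue.
  apply continuity_pt_plus.
  - apply (continuity_pt_comp (fun y => Rmin y t) g).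
    + apply lip_cont; intros; apply Rmin_lip.
    + apply Hg.
  - apply continuity_pt_scal. apply continuity_pt_minus.
    + apply lip_cont; intros; apply Rmax_lip.
    + apply continuity_pt_const. intros u v; reflexivity.
Qed.

Lemma SS_app (bs : list R) t : StronglySorted Rlt bs -> (forall z, In z bs -> z < t) ->
  StronglySorted Rlt (bs ++ [t]).
Proof.
  induction bs as [|z bs IH]; intros Hs Hz; simpl.
  - constructor; constructor.
  - inversion Hs; subst. constructor.
    + apply IH; auto. intros; apply Hz; simpl; auto.
    + apply Forall_app; split; auto. constructor; [apply Hz; simpl; auto| constructor].
Qed.

Lemma glue_pieces S g bs t a : (forall z, In z bs -> z < t) -> pieces S g bs -> S a ->
  pieces S (glue g t a) (bs ++ [t]).
Proof.
  intros Hz Hp Ha i Hi. rewrite length_app in Hi; simpl in Hi.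
  unfold glue.
  destruct (Nat.lt_ge_cases i (length bs)) as [Hlt|Hge].
  - destruct (Hp i ltac:(lia)) as [a0 [b0 [HS Hf]]].
    exists a0, b0; split; auto. intros x [H1 H2].
    assert (Hxi : x <= nth i bs 0).
    { destruct H2 as [H2|H2]. rewrite length_app in H2; simpl in H2; lia.
      rewrite app_nth1 in H2; auto. }
    assert (Hit : nth i bs 0 < t) by (apply Hz; apply nth_In; auto).
    rewrite Rmin_left by lra. rewrite Rmax_right by lra.
    rewrite Hf. ring. split; [|right; auto].
    destruct H1 as [H1|H1]; [left; auto|right]. rewrite app_nth1 in H1; auto. lia.
  - destruct (Nat.eq_dec i (length bs)) as [Heq|Hne].
    + destruct (Hp i ltac:(lia)) as [a0 [b0 [HS Hf]]].
      exists a0, b0; split; auto. intros x [H1 H2].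
      assert (Hxt : x <= t).
      { destruct H2 as [H2|H2]. rewrite length_app in H2; simpl in H2; lia.
        rewrite app_nth2 in H2 by lia. subst i. rewrite Nat.sub_diag in H2. exact H2. }
      rewrite Rmin_left by lra. rewrite Rmax_right by lra.
      rewrite Hf. ring. split; [|left; auto].
      destruct H1 as [H1|H1]; [left; auto|].
      destruct i as [|i']; [left; auto|right]. rewrite app_nth1 in H1; auto. lia.
    + assert (i = Datatypes.S (length bs)) by lia. subst i.
      exists a, (g t - a * t); split; auto. intros x [H1 H2].
      destruct H1 as [H1|H1]; [discriminate|].
      replace (Datatypes.S (length bs) - 1)%nat with (length bs) in H1 by lia.
      rewrite app_nth2 in H1 by lia. rewrite Nat.sub_diag in H1. simpl in H1.
      rewrite Rmin_right by lra. rewrite Rmax_left by lra. ring.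
Qed.

Section F.
Variables (xs qs : nat -> R) (y0 s1 s2 : R).
Fixpoint F (j : nat) : R -> R :=
  match j with
  | O => fun x => y0 + s2 * (x - xs O)
  | S j => glue (glue (F j) (qs j) s1) (xs (S j)) s2
  end.
End F.

Section FL.
Variables (xs qs : nat -> R) (y0 s1 s2 : R).
Hypothesis H1 : forall j, xs j < qs j < xs (S j).
Notation F := (F xs qs y0 s1 s2).

Lemma F_S_eq j x : F (S j) x =
  F j (Rmin (Rmin x (xs (S j))) (qs j)) + s1 * (Rmax (Rmin x (xs (S j))) (qs j) - qs j)
  + s2 * (Rmax x (xs (S j)) - xs (S j)).
Proof. reflexivity. Qed.

Lemma L1 j z : xs j <= z -> F j z = F j (xs j) + s2 * (z - xs j).
Proof.
  destruct j as [|j]; intros Hz.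
  - simpl. ring.
  - rewrite !F_S_eq. pose proof (H1 j).
    assert (E1 : Rmin z (xs (S j)) = xs (S j)) by (apply Rmin_right; lra).
    assert (E2 : Rmin (xs (S j)) (xs (S j)) = xs (S j)) by (apply Rmin_right; lra).
    assert (E3 : Rmin (xs (S j)) (qs j) = qs j) by (apply Rmin_right; lra).
    assert (E4 : Rmax (xs (S j)) (qs j) = xs (S j)) by (apply Rmax_left; lra).
    assert (E5 : Rmax z (xs (S j)) = z) by (apply Rmax_left; lra).
    assert (E6 : Rmax (xs (S j)) (xs (S j)) = xs (S j)) by (apply Rmax_left; lra).
    rewrite E1, E2, E3, E4, E5, E6. ring.
Qed.

Lemma L3 m x : x <= xs m -> F (S m) x = F m x.
Proof.
  intros Hx. rewrite F_S_eq. pose proof (H1 m).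
  rewrite (Rmin_left x) by lra. rewrite (Rmin_left x) by lra.
  rewrite (Rmax_right x (qs m)) by lra. rewrite (Rmax_right x) by lra. ring.
Qed.

Lemma xs_mono k m : xs m <= xs (k + m).
Proof.
  induction k; simpl. lra. pose proof (H1 (k + m)). lra.
Qed.

Lemma Lstab k m x : x <= xs m -> F (k + m) x = F m x.
Proof.
  intros Hx; induction k; [reflexivity|].
  change (S k + m)%nat with (S (k + m)).
  rewrite L3; auto. pose proof (xs_mono k m). lra.
Qed.

Lemma Lform j x : xs j <= x <= xs (S j) ->
  F (S j) x = F j (xs j) + s2 * (Rmin x (qs j) - xs j) + s1 * (Rmax x (qs j) - qs j).
Proof.
  intros Hx. rewrite F_S_eq. rewrite (Rmin_left x (xs (S j))) by lra. rewrite (Rmax_right x (xs (S j))) by lra.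
  rewrite (L1 j (Rmin x (qs j))). ring. pose proof (H1 j).
  unfold Rmin; destruct Rle_dec; lra.
Qed.

Lemma L2 (ys : nat -> R) : ys O = y0 ->
  (forall j, ys (S j) = ys j + s2 * (qs j - xs j) + s1 * (xs (S j) - qs j)) ->
  forall j, F j (xs j) = ys j.
Proof.
  intros H0 Hs j; induction j.
  - simpl. rewrite H0. ring.
  - pose proof (H1 j). rewrite Lform by lra. rewrite IHj, Hs.
    rewrite Rmin_right by lra. rewrite Rmax_left by lra. ring.
Qed.

Lemma FPL (P : R -> Prop) : P s1 -> P s2 ->
  forall j, continuity (F j) /\ exists bs, StronglySorted Rlt bs /\
     (forall z, In z bs -> z < qs j) /\ pieces P (F j) bs.
Proof.
  intros P1 P2 j; induction j as [|j [Hc [bs [Hs [Hz Hp]]]]].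
  - split.
    + simpl. intro x. apply continuity_pt_plus. apply continuity_pt_const; intros u v; auto.
      apply continuity_pt_scal. apply continuity_pt_minus. apply derivable_continuous_pt, derivable_pt_id.
      apply continuity_pt_const; intros u v; auto.
    + exists []. split; [constructor|]. split; [simpl; tauto|].
      intros i Hi. simpl in Hi. exists s2, (y0 - s2 * xs O). split; auto.
      intros x _. simpl. ring.
  - split.
    + simpl. apply glue_cont, glue_cont, Hc.
    + exists ((bs ++ [qs j]) ++ [xs (S j)]). pose proof (H1 j). pose proof (H1 (S j)).
      assert (Hz' : forall z, In z (bs ++ [qs j]) -> z < xs (S j)).
      { intros z Hin. apply in_app_or in Hin. destruct Hin as [Hin|Hin].
        apply Hz in Hin; lra. simpl in Hin. destruct Hin as [<-|[]]. lra. }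
      split; [apply SS_app; auto; apply SS_app; auto|].
      split.
      * intros z Hin. apply in_app_or in Hin. destruct Hin as [Hin|Hin].
        apply Hz' in Hin; lra. simpl in Hin. destruct Hin as [<-|[]]. lra.
      * simpl. apply glue_pieces; auto. apply glue_pieces; auto.
Qed.

Lemma find_j n x : xs O <= x <= xs (S n) -> exists j, (j <= n)%nat /\ xs j <= x <= xs (S j).
Proof.
  induction n; intros Hx.
  - exists O; split; auto.
  - destruct (Rle_dec x (xs (S n))).
    + destruct IHn as [j [Hj Hj2]]. lra. exists j; split; auto.
    + exists (S n); split; auto. lra.
Qed.
End FL.

Lemma inc_case (alpha : R) (Halpha : 0 < alpha < 1) (u : R -> R)
  (Hcont : continuous_on_interval u (-1) 1)
  (Hinc : forall x y, -1 <= x -> x <= y -> y <= 1 -> u x <= u y)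
  (eps : R) (He : 0 < eps) :
    exists g : R -> R, alpha_power_PL alpha g /\
      forall x : R, -1 <= x <= 1 -> Rabs (u x - g x) <= eps.
Proof.
  set (clamp := fun x => Rmax (-1) (Rmin x 1)).
  assert (Hc1 : forall x, -1 <= clamp x <= 1).
  { intro x; unfold clamp, Rmax, Rmin; repeat destruct Rle_dec; lra. }
  assert (Hc2 : forall x, -1 <= x <= 1 -> clamp x = x).
  { intros x Hx; unfold clamp, Rmax, Rmin; repeat destruct Rle_dec; lra. }
  assert (Hc3 : forall x y, Rabs (clamp y - clamp x) <= Rabs (y - x)).
  { intros x y; unfold clamp, Rmax, Rmin; repeat destruct Rle_dec;
    unfold Rabs; repeat destruct Rcase_abs; lra. }
  assert (Hc4 : forall x y, x <= y -> clamp x <= clamp y).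
  { intros x y H; unfold clamp, Rmax, Rmin; repeat destruct Rle_dec; lra. }
  set (ub := fun x => u (clamp x)).
  assert (Hucont : forall x, continuity_pt ub x).
  { intros x e He'. destruct (Hcont (clamp x) (Hc1 x) e He') as [d [Hd Hd2]].
    exists d. split; [lra|]. intros y [_ Hy]. simpl in *. unfold R_dist in *.
    unfold ub. apply Hd2; [apply Hc1|]. pose proof (Hc3 x y); lra. }
  assert (Hmon : forall x y, x <= y -> ub x <= ub y).
  { intros x y H; unfold ub. pose proof (Hc1 x); pose proof (Hc1 y); pose proof (Hc4 x y H).
    apply Hinc; lra. }
  assert (He2 : 0 < eps / 2) by lra.
  destruct (Heine ub (fun c => -1 <= c <= 1) (compact_P3 (-1) 1)
    (fun x _ => Hucont x) (mkposreal (eps/2) He2)) as [[d Hd] Hδ].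
  simpl in Hδ.
  assert (HU : forall a b, Rabs (a - b) < d -> Rabs (ub a - ub b) < eps / 2).
  { intros a b Hab.
    assert (Ea : ub a = ub (clamp a)) by (unfold ub; rewrite (Hc2 (clamp a)); auto).
    assert (Eb : ub b = ub (clamp b)) by (unfold ub; rewrite (Hc2 (clamp b)); auto).
    rewrite Ea, Eb. apply Hδ; auto. pose proof (Hc3 b a). lra. }
  destruct (archimed_cor1 (d/2) ltac:(lra)) as [N [HN HN0]].
  assert (HNpos : 0 < INR N) by (apply lt_0_INR; lia).
  set (h := 2 / INR N).
  assert (Hh0 : 0 < h) by (unfold h; apply Rdiv_lt_0_compat; lra).
  assert (Hhd : h < d).
  { unfold h. unfold Rdiv. replace (2 * / INR N) with (2 * (/ INR N)) by ring. lra. }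
  set (c := eps / 8).
  assert (Hc0 : 0 < c) by (unfold c; lra).
  assert (Habs : Rabs alpha < 1) by (rewrite Rabs_pos_eq; lra).
  destruct (pow_lt_1_zero alpha Habs c Hc0) as [K HK].
  specialize (HK K (le_n _)). rewrite Rabs_pos_eq in HK by (apply pow_le; lra).
  set (B := c + eps / (2 * h) + 1).
  assert (HB0 : 0 < B).
  { unfold B. assert (0 < eps / (2 * h)) by (apply Rdiv_lt_0_compat; lra). lra. }
  destruct (pow_lt_1_zero alpha Habs (/ B) (Rinv_0_lt_compat _ HB0)) as [M HM].
  specialize (HM M (le_n _)). rewrite Rabs_pos_eq in HM by (apply pow_le; lra).
  assert (HaM : 0 < alpha ^ M) by (apply pow_lt; lra).
  set (s1 := alpha ^ K). set (s2 := / alpha ^ M).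
  assert (Hs1 : 0 < s1) by (apply pow_lt; lra).
  assert (Hs2 : s2 > B).
  { unfold s2. rewrite <- (Rinv_inv B). apply Rinv_lt_contravar; auto.
    apply Rmult_lt_0_compat; auto. apply Rinv_0_lt_compat; auto. }
  assert (HBh : B * h = c * h + eps / 2 + h) by (unfold B; field; lra).
  set (xs := fun j => -1 + INR j * h).
  set (ys := fun j => ub (xs j) + c * (xs j + 1)).
  set (D := fun j => ys (S j) - ys j).
  set (p := fun j => (D j - s1 * h) / (s2 - s1)).
  set (qs := fun j => xs j + p j).
  assert (Hxs : forall j, xs (S j) = xs j + h) by (intro j; unfold xs; rewrite S_INR; ring).
  assert (HD : forall j, s1 * h < D j < s2 * h).
  { intro j. unfold D, ys. rewrite Hxs.
    pose proof (Hmon (xs j) (xs j + h) ltac:(lra)).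
    assert (Rabs (ub (xs j + h) - ub (xs j)) < eps / 2).
    { apply HU. replace (xs j + h - xs j) with h by ring. rewrite Rabs_pos_eq; lra. }
    assert (Hr : ub (xs j + h) - ub (xs j) < eps / 2).
    { revert H0. unfold Rabs; destruct Rcase_abs; lra. }
    assert (s1 * h < c * h) by (apply Rmult_lt_compat_r; auto).
    assert (B * h < s2 * h) by (apply Rmult_lt_compat_r; auto).
    split; lra. }
  assert (Hs12 : s1 < s2).
  { pose proof (HD O). nra. }
  assert (Hp : forall j, p j * (s2 - s1) = D j - s1 * h).
  { intro j. unfold p. field. lra. }
  assert (H1 : forall j, xs j < qs j < xs (S j)).
  { intro j. rewrite Hxs. unfold qs. pose proof (Hp j). pose proof (HD j).
    split; nra. }
  assert (Hrec : forall j, ys (S j) = ys j + s2 * (qs j - xs j) + s1 * (xs (S j) - qs j)).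
  { intro j. rewrite Hxs. unfold qs. pose proof (Hp j).
    assert (ys (S j) = ys j + D j) by (unfold D; ring). nra. }
  set (P := fun a => exists k : Z, a = 1 * powerRZ alpha k).
  assert (P1 : P s1).
  { exists (Z.of_nat K). unfold s1. rewrite pow_powerRZ. ring. }
  assert (P2 : P s2).
  { exists (- Z.of_nat M)%Z. unfold s2. rewrite powerRZ_neg', pow_powerRZ. ring. }
  exists (F xs qs (ys O) s1 s2 N). split.
  { exists 1. destruct (FPL xs qs (ys O) s1 s2 H1 P P1 P2 N) as [Hc [bs [Hs [_ Hpc]]]].
    split; auto. exists bs. split; auto. }
  intros x Hx.
  destruct N as [|n]; [lia|].
  assert (Hx0 : xs O = -1) by (unfold xs; simpl; ring).
  assert (HxN : xs (S n) = 1) by (unfold xs, h; field; lra).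
  destruct (find_j xs n x ltac:(lra)) as [j [Hj Hjx]].
  replace (S n) with ((n - j) + S j)%nat by lia.
  rewrite Lstab by (auto; lra).
  rewrite Lform by (auto; lra).
  rewrite (L2 xs qs (ys O) s1 s2 H1 ys eq_refl Hrec).
  assert (Hg : ys j <= ys j + s2 * (Rmin x (qs j) - xs j) + s1 * (Rmax x (qs j) - qs j) <= ys (S j)).
  { rewrite Hrec. pose proof (H1 j). unfold Rmin, Rmax; destruct Rle_dec; nra. }
  assert (Hux : u x = ub x) by (unfold ub; rewrite Hc2; auto).
  rewrite Hux.
  pose proof (Hmon (xs j) x ltac:(lra)). pose proof (Hmon x (xs (S j)) ltac:(lra)).
  assert (Hd1 : ub (xs (S j)) - ub (xs j) < eps / 2).
  { assert (Rabs (ub (xs (S j)) - ub (xs j)) < eps / 2).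
    { apply HU. rewrite Hxs. replace (xs j + h - xs j) with h by ring. rewrite Rabs_pos_eq; lra. }
    revert H2. unfold Rabs; destruct Rcase_abs; lra. }
  assert (Hxj : -1 <= xs j) by (unfold xs; pose proof (pos_INR j); nra).
  assert (HxSj : xs (S j) <= 1).
  { rewrite <- HxN. unfold xs. pose proof (le_INR (S j) (S n) ltac:(lia)). nra. }
  assert (0 <= c * (xs j + 1)) by nra.
  assert (c * (xs (S j) + 1) <= 2 * c) by nra.
  assert (c * 2 <= eps / 4) by (unfold c; lra).
  unfold ys in *. apply Rabs_le. split; lra.
Qed.

Theorem mainTheorem5 (alpha : R) (Halpha : 0 < alpha < 1) (u : R -> R)
  (Hcont : continuous_on_interval u (-1) 1)
  (Hmono : monotone_on u (-1) 1) :
  forall eps : R, 0 < eps ->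
    exists g : R -> R, alpha_power_PL alpha g /\
      forall x : R, -1 <= x <= 1 -> Rabs (u x - g x) <= eps.
Proof.
  intros eps He. destruct Hmono as [Hi|Hd].
  - apply inc_case; auto.
  - destruct (inc_case alpha Halpha (fun x => - u x)) with (eps := eps)
      as [g [[c [Hgc [bs [Hs Hp]]]] Hb]]; auto.
    + intros x Hx e He'. destruct (Hcont x Hx e He') as [d [Hd0 Hd1]].
      exists d; split; auto. intros y Hy Hyx.
      replace (- u y - - u x) with (- (u y - u x)) by ring. rewrite Rabs_Ropp. auto.
    + intros x y Hx Hxy Hy. specialize (Hd x y Hx Hxy Hy). lra.
    + exists (fun x => - g x). split.
      * exists (- c). split.
        -- apply (continuity_opp g Hgc).
        -- exists bs. split; auto. intros i Hi.
           destruct (Hp i Hi) as [a [b [[k Hk] Hf]]].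
           exists (- a), (- b). split.
           ++ exists k. rewrite Hk. ring.
           ++ intros x Hx. rewrite Hf by auto. ring.
      * intros x Hx. specialize (Hb x Hx).
        replace (u x - - g x) with (- (- u x - g x)) by ring. rewrite Rabs_Ropp. auto.
Qed.
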